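(* For every $n\ge 1$, there is a one-to-one correspondence between the set of relative derangements of type $B$ on $[n]$ and the set of signed skew derangements on $[n]$.
   Context: A signed permutation on $[n]=\{1,\dots,n\}$ is a word $\pi_1\cdots\pi_n$ which is an ordinary permutation of $[n]$ in which some entries carry a bar. A relative derangement of type $B$ on $[n]$ is a signed permutation $\pi_1\cdots\pi_n$ such that for every $1\le i\le n-1$, the entry $i$ is not immediately followed by $i+1$, and $\bar i$ is not immediately followed by $\overline{i+1}$. A signed set on $[n]$ is the set $[n]$ with some of its elements barred. For a signed set $X$ on $[n]$, $X-1$ denotes the set obtained by subtracting $1$ from each element, with the rule $\bar i-1=\overline{i-1}$ (so $X-1$ is a signed set on $\{0,1,\dots,n-1\}$, possibly containing $\bar 0$). A signed skew derangement on $[n]$ is a pair consisting of a signed set $X$ on $[n]$ and a bijection $f:X\to X-1$ such that $f(x)\neq x$ for all $x\in X$ (equality as signed elements). *)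

(* Defs.v *)
From mathcomp Require Import all_boot all_order.
From mathcomp Require Import all_fingroup.
Set Implicit Arguments.
Unset Strict Implicit.
Unset Printing Implicit Defensive.

(* Signed elements are encoded as pairs (m, barred?) : nat * bool. *)

(* We encode it as a pair (s, b) with s : {perm 'I_n} and b : {ffun 'I_n -> bool}:
   the entry at (0-based) position j is the value (s j).+1 in [n], barred iff b j. *)
Definition signed_perm (n : nat) : finType :=
  ({perm 'I_n} * {ffun 'I_n -> bool})%type.

Definition sp_entry n (w : signed_perm n) (j : 'I_n) : nat * bool :=
  ((w.1 j).+1, w.2 j).

Definition rel_derangement_B n (w : signed_perm n) : bool :=
  [forall i : 'I_n, (0 < val i) ==>
   [forall j : 'I_n, forall k : 'I_n, (val k == (val j).+1) ==>
      ~~ ((sp_entry w j == (val i, false)) && (sp_entry w k == ((val i).+1, false)))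
   && ~~ ((sp_entry w j == (val i, true)) && (sp_entry w k == ((val i).+1, true)))]].

Definition RelDerB (n : nat) := {w : signed_perm n | rel_derangement_B w}.

(* A signed set X on [n] is encoded by X : {ffun 'I_n -> bool}: the index k
   stands for the element k+1 of [n], barred iff X k.
   The elements of X, as signed elements: *)
Definition sset_elem n (X : {ffun 'I_n -> bool}) (k : 'I_n) : nat * bool :=
  ((val k).+1, X k).
(* The elements of X - 1 (a signed set on {0,..,n-1}): index k stands for
   (k+1) - 1 = k, with the same bar as k+1 in X. *)
Definition sset_elem_m1 n (X : {ffun 'I_n -> bool}) (k : 'I_n) : nat * bool :=
  (val k, X k).

(* A signed skew derangement: a signed set X and a bijection f : X -> X - 1,
   encoded (through the index bijections above) by a permutation p of 'I_n,
   f (sset_elem X k) = sset_elem_m1 X (p k), such that f x <> x as signed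
   elements. *)
Definition signed_skew_pair (n : nat) : finType :=
  ({ffun 'I_n -> bool} * {perm 'I_n})%type.

Definition signed_skew_derangement n (d : signed_skew_pair n) : bool :=
  [forall k : 'I_n, sset_elem_m1 d.1 (d.2 k) != sset_elem d.1 k].

Definition SignedSkewDer (n : nat) := {d : signed_skew_pair n | signed_skew_derangement d}.

(* Main.v *)
Require Import Defs.
From mathcomp Require Import all_boot all_order all_fingroup.
From mathcomp Require Import zify.
Set Implicit Arguments.
Unset Strict Implicit.
Unset Printing Implicit Defensive.

Definition amin n (s : {perm 'I_n.+1}) (j : 'I_n.+1) : 'I_n.+1 :=
  [arg min_(k < j | (k <= j)%N) (s k : nat)].

Lemma amin_le n (s : {perm 'I_n.+1}) (j : 'I_n.+1) : amin s j <= j.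
Proof. by rewrite /amin; case: arg_minnP. Qed.

Lemma amin_min n (s : {perm 'I_n.+1}) (j k : 'I_n.+1) : k <= j -> s (amin s j) <= s k.
Proof. by rewrite /amin; case: arg_minnP => // i _ H /H. Qed.

Definition phi n (s : {perm 'I_n.+1}) (j : 'I_n.+1) : 'I_n.+1 :=
  if (j < n) && (s (amin s j) < s (inord j.+1)) then s (inord j.+1) else s (amin s j).

Lemma inordS n (j : 'I_n.+1) : j < n -> (inord j.+1 : 'I_n.+1) = j.+1 :> nat.
Proof. by move=> h; rewrite inordK. Qed.

Lemma phi_inj n (s : {perm 'I_n.+1}) : injective (@phi n s).
Proof.
have key: forall j j' : 'I_n.+1, j <= j' -> phi s j = phi s j' -> j = j'.
  move=> j j' le E; move: E; rewrite /phi.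
  have aj := amin_le s j; have aj' := amin_le s j'.
  case: ifP => C1; case: ifP => C2.
  - move: C1 C2 => /andP[h1 _] /andP[h2 _] /perm_inj/(congr1 (@nat_of_ord _)); rewrite !inordS // => -[]; exact: val_inj.
  - move: C1 => /andP[h1 h2] /perm_inj E.
    have := amin_min s (amin_le s j); rewrite -/(amin s j) => _.
    have : s (amin s j') <= s (amin s j) by apply: amin_min; lia.
    rewrite -E; lia.
  - move: C2 => /andP[h1 h2] /perm_inj/(congr1 (@nat_of_ord _)) E; rewrite inordS // in E; lia.
  - move: C1 => /negbT N1 E; case: (ltngtP j j') => [lt|gt|/val_inj //]; last by lia.
    have jn : j < n by move: (ltn_ord j'); lia.
    have hle : s (inord j.+1) <= s (amin s j) by move: N1; rewrite jn /=; lia.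
    have : s (amin s j') <= s ((inord j.+1 : 'I_n.+1)) by apply: amin_min; rewrite inordS.
    move=> h3; have E' := congr1 (@nat_of_ord _) E.
    have : s ((inord j.+1 : 'I_n.+1)) = s (amin s j) by apply/val_inj/eqP; rewrite eqn_leq hle E h3.
    move/perm_inj/(congr1 (@nat_of_ord _)); rewrite inordS //; lia.
move=> j j' E; case/orP: (leq_total j j') => h; first exact: key.
by symmetry; apply: key.
Qed.

Definition Gp n (s : {perm 'I_n.+1}) : {perm 'I_n.+1} :=
  perm (inj_comp (@phi_inj n s) (@perm_inj _ s^-1)%g).

Lemma GpE n (s : {perm 'I_n.+1}) j : Gp s (s j) = phi s j.
Proof. by rewrite /Gp permE /= permK. Qed.

Lemma keyv n (s : {perm 'I_n.+1}) (j : 'I_n.+1) :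
  j < n -> val (s (inord j.+1)) = (s j).+1 -> phi s j = s (inord j.+1).
Proof.
move=> jn E; rewrite /phi jn /=.
have := amin_min s (leqnn j); rewrite E => h.
by rewrite ifT //; apply: leq_ltn_trans h _.
Qed.

Lemma key n (s : {perm 'I_n.+1}) (j : 'I_n.+1) :
  val (phi s j) = (s j).+1 -> j < n /\ val (s (inord j.+1)) = (s j).+1.
Proof.
rewrite /phi; case: ifP => [/andP[jn _] -> // | _ E].
have := amin_min s (leqnn j); rewrite E; lia.
Qed.

Lemma step n (s s' : {perm 'I_n.+1}) (j : 'I_n.+1) :
  (forall k : 'I_n.+1, j < k -> s k = s' k) -> phi s j = phi s' j.
Proof.
move=> H.
have pre : forall (s1 s2 : {perm 'I_n.+1}), (forall k : 'I_n.+1, j < k -> s1 k = s2 k) ->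
   forall k : 'I_n.+1, k <= j -> (s2^-1)%g (s1 k) <= j.
  move=> s1 s2 H12 k kj; rewrite leqNgt; apply/negP => lt.
  have := H12 _ lt; rewrite permKV => /perm_inj E.
  by move: lt; rewrite E ltnNge kj.
have Hs : forall k : 'I_n.+1, j < k -> s' k = s k by move=> k /H ->.
have Em : s (amin s j) = s' (amin s' j).
  apply/val_inj/eqP; rewrite eqn_leq; apply/andP; split.
  - have := amin_min s (pre _ _ Hs _ (amin_le s' j)); rewrite permKV //.
  - have := amin_min s' (pre _ _ H _ (amin_le s j)); rewrite permKV //.
rewrite /phi Em; case jn: (j < n) => //=.
by rewrite H // inordS.
Qed.

Lemma decode n (s s' : {perm 'I_n.+1}) : Gp s = Gp s' -> s = s'.
Proof.
move=> EG.
suff: forall t (j : 'I_n.+1), n.+1 - t <= j -> s j = s' j.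
  by move=> h; apply/permP => j; apply: (h n.+1); rewrite subnn.
elim=> [|t IH] j hj; first by move: (ltn_ord j); lia.
case: (leqP (n.+1 - t) j) => [/IH // | lt].
have H : forall k : 'I_n.+1, j < k -> s k = s' k by move=> k jk; apply: IH; lia.
have := step H; rewrite -GpE -GpE EG => /perm_inj //.
Qed.

Definition Phi n (w : signed_perm n.+1) : signed_skew_pair n.+1 :=
  ([ffun v => w.2 ((w.1^-1)%g v)], Gp w.1).

Lemma good1P n (w : signed_perm n.+1) : reflect
  (forall j k : 'I_n.+1, (k : nat) = (j : nat).+1 -> (w.1 k : nat) = (w.1 j : nat).+1 -> w.2 j != w.2 k)
  (rel_derangement_B w).
Proof.
apply: (iffP idP).
  move=> /forallP H j k Ek Es.
  have := H (w.1 k); rewrite /= Es /= => /forallP/(_ j)/forallP/(_ k)/implyP.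
  rewrite /= Ek eqxx => /(_ isT); rewrite /sp_entry !xpair_eqE /= Es !eqxx /=.
  by case: (w.2 j); case: (w.2 k).
move=> H; apply/forallP => i; apply/implyP => i0; apply/forallP => j; apply/forallP => k.
apply/implyP => /eqP Ek; rewrite /sp_entry !xpair_eqE.
apply/andP; split; apply/negP => /andP[/andP[/eqP E1 /eqP B1] /andP[/eqP E2 /eqP B2]];
  (have Es : (w.1 k : nat) = (w.1 j : nat).+1 by lia);
  by move: (H j k Ek Es); rewrite B1 B2 eqxx.
Qed.

Lemma goodE n (w : signed_perm n.+1) :
  rel_derangement_B w = signed_skew_derangement (Phi w).
Proof.
case: w => s b /=.
apply/idP/idP.
  move/good1P=> /= H; apply/forallP => v.
  rewrite /sset_elem_m1 /sset_elem /= xpair_eqE; apply/negP => /andP[/eqP E1 /eqP E2].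
  set j := (s^-1)%g v in E1 E2.
  have vE : v = s j by rewrite /j permKV.
  rewrite vE GpE in E1 E2.
  have [jn Es] := key E1.
  rewrite (keyv jn Es) !ffunE !permK in E2.
  have := H j (inord j.+1) (inordS jn) Es; by rewrite E2 eqxx.
move=> /forallP H; apply/good1P => /= j k Ek Es; apply/negP => /eqP Eb.
have jn : j < n by move: (ltn_ord k); lia.
have kE : k = inord j.+1 by apply: val_inj; rewrite /= inordS.
have := H (s j); rewrite /sset_elem_m1 /sset_elem /= GpE.
rewrite kE in Es; rewrite (keyv jn Es) !ffunE !permK -kE Eb.
by rewrite xpair_eqE -Es /= -kE !eqxx.
Qed.

Lemma Phi_inj n : injective (@Phi n).
Proof.
move=> [s b] [s' b'] [Eb EG].
have Es := decode EG; subst s'; congr (_, _).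
apply/ffunP => j.
have := congr1 (fun f : {ffun 'I_n.+1 -> bool} => f (s j)) Eb.
by rewrite /= !ffunE permK.
Qed.

Lemma Phi_bij n : bijective (@Phi n).
Proof.
apply: inj_card_bij; first exact: Phi_inj.
by rewrite /signed_perm /signed_skew_pair !card_prod mulnC.
Qed.

Theorem theorem2 (n : nat) : 1 <= n ->
  exists f : RelDerB n -> SignedSkewDer n, bijective f.
Proof.
case: n => [//|n] _.
have [Pinv PK PKV] := Phi_bij n.
have g1 : forall x : RelDerB n.+1, signed_skew_derangement (Phi (val x)).
  by move=> x; rewrite -goodE; exact: valP x.
have g2 : forall y : SignedSkewDer n.+1, rel_derangement_B (Pinv (val y)).
  by move=> y; rewrite goodE PKV; exact: valP y.
exists (fun x => exist _ (Phi (val x)) (g1 x)).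
exists (fun y => exist _ (Pinv (val y)) (g2 y)).
  by move=> x; apply: val_inj; rewrite /= PK.
by move=> y; apply: val_inj; rewrite /= PKV.
Qed.
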